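(* Let $X$ be a zero-dimensional compact Hausdorff space and let $X=\varprojlim S$ for an inverse system $S=\{X_\alpha,p_{\alpha\beta};\mathcal A\}$ of compact Hausdorff spaces over a directed set $\mathcal A$, with limit projections $p_\alpha\colon X\to X_\alpha$. Then the natural map $h=(J(p_\alpha))_{\alpha\in\mathcal A}\colon J(X)\to\varprojlim J(S)$, where $J(S)=\{J(X_\alpha),J(p_{\alpha\beta});\mathcal A\}$, is a homeomorphism.
   Context: A max-min measure on a compact Hausdorff space $X$ is a functional $\mu\colon C(X)\to\mathbb R$ (not assumed continuous) such that $\mu(c_X)=c$ for constants $c$, $\mu(\varphi\vee\psi)=\mu(\varphi)\vee\mu(\psi)$, and $\mu(c\wedge\varphi)=c\wedge\mu(\varphi)$ for $c\in\mathbb R$. $J(X)$ is the set of max-min measures with the topology of pointwise convergence on $C(X)$. For a continuous map $f\colon X\to Y$, $J(f)\colon J(X)\to J(Y)$ is $J(f)(\mu)(\varphi)=\mu(\varphi\circ f)$. A space is zero-dimensional if it has a base of clopen sets. *)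

(* Defs.v *)
From Stdlib Require Import Reals List.
Open Scope R_scope.
Unset Implicit Arguments.

Definition topology (X : Type) := (X -> Prop) -> Prop.

Definition is_topology {X : Type} (T : topology X) : Prop :=
  T (fun _ => True) /\ T (fun _ => False) /\
  (forall U V, T U -> T V -> T (fun x => U x /\ V x)) /\
  (forall F : (X -> Prop) -> Prop, (forall U, F U -> T U) ->
      T (fun x => exists U, F U /\ U x)).

Definition continuous {X Y : Type} (TX : topology X) (TY : topology Y)
  (f : X -> Y) : Prop :=
  forall V, TY V -> TX (fun x => V (f x)).

Definition cont_on {X Y : Type} (TX : topology X) (A : X -> Prop)
  (TY : topology Y) (f : X -> Y) : Prop :=
  forall V, TY V -> exists U, TX U /\ forall x, A x -> (U x <-> V (f x)).

Definition homeo_on {X Y : Type} (TX : topology X) (A : X -> Prop)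
  (TY : topology Y) (B : Y -> Prop) (h : X -> Y) : Prop :=
  (forall x, A x -> B (h x)) /\
  exists g : Y -> X,
    (forall y, B y -> A (g y)) /\
    (forall x, A x -> g (h x) = x) /\
    (forall y, B y -> h (g y) = y) /\
    cont_on TX A TY h /\ cont_on TY B TX g.

Definition top_compact {X : Type} (T : topology X) : Prop :=
  forall F : (X -> Prop) -> Prop,
    (forall U, F U -> T U) -> (forall x, exists U, F U /\ U x) ->
    exists l : list (X -> Prop),
      (forall U, In U l -> F U) /\ (forall x, exists U, In U l /\ U x).

Definition top_hausdorff {X : Type} (T : topology X) : Prop :=
  forall x y, x <> y -> exists U V, T U /\ T V /\ U x /\ V y /\
    (forall z, ~ (U z /\ V z)).

Definition clopen {X : Type} (T : topology X) (W : X -> Prop) : Prop :=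
  T W /\ T (fun x => ~ W x).

Definition zero_dim {X : Type} (T : topology X) : Prop :=
  forall U x, T U -> U x -> exists W, clopen T W /\ W x /\ (forall y, W y -> U y).

Definition R_top : topology R :=
  fun U => forall x, U x -> exists eps, 0 < eps /\
    forall y, Rabs (y - x) < eps -> U y.

Definition CF {X : Type} (T : topology X) : Type :=
  { phi : X -> R | continuous T R_top phi }.

(* max-min measures: mu : C(X) -> R (no continuity assumed) *)
Definition maxmin {X : Type} (T : topology X) (mu : CF T -> R) : Prop :=
  (forall (c : R) (phi : CF T), (forall x, proj1_sig phi x = c) -> mu phi = c) /\
  (forall phi psi chi : CF T,
     (forall x, proj1_sig chi x = Rmax (proj1_sig phi x) (proj1_sig psi x)) ->
     mu chi = Rmax (mu phi) (mu psi)) /\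
  (forall (c : R) (phi chi : CF T),
     (forall x, proj1_sig chi x = Rmin c (proj1_sig phi x)) ->
     mu chi = Rmin c (mu phi)).

(* topology of pointwise convergence on C(X) (on the ambient space R^{C(X)};
   J(X) carries the subspace topology) *)
Definition ptw_top {X : Type} (T : topology X) : topology (CF T -> R) :=
  fun U => forall mu, U mu -> exists (l : list (CF T)) (eps : R), 0 < eps /\
    forall nu, (forall phi, In phi l -> Rabs (nu phi - mu phi) < eps) -> U nu.

Lemma cont_comp_CF {X Y : Type} (TX : topology X) (TY : topology Y)
  (f : X -> Y) (hf : continuous TX TY f) (psi : CF TY) :
  continuous TX R_top (fun x => proj1_sig psi (f x)).
Proof. intros V HV. exact (hf _ (proj2_sig psi V HV)). Qed.

Definition Jmap {X Y : Type} (TX : topology X) (TY : topology Y)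
  (f : X -> Y) (hf : continuous TX TY f) (mu : CF TX -> R) : CF TY -> R :=
  fun psi => mu (exist _ (fun x => proj1_sig psi (f x)) (cont_comp_CF TX TY f hf psi)).

Definition prod_top {A : Type} {Y : A -> Type} (T : forall a, topology (Y a))
  : topology (forall a, Y a) :=
  fun U => forall x, U x -> exists l : list {a : A & Y a -> Prop},
    (forall q, In q l -> T (projT1 q) (projT2 q) /\ projT2 q (x (projT1 q))) /\
    (forall y, (forall q, In q l -> projT2 q (y (projT1 q))) -> U y).

Definition directed {A : Type} (le : A -> A -> Prop) : Prop :=
  (forall a, le a a) /\ (forall a b c, le a b -> le b c -> le a c) /\
  (forall a b, exists c, le a c /\ le b c).

Definition inv_system {A : Type} (le : A -> A -> Prop) (X : A -> Type)
  (p : forall a b, X b -> X a) : Prop :=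
  (forall a x, p a a x = x) /\
  (forall a b c x, le a b -> le b c -> p a b (p b c x) = p a c x).

Definition Lim {A : Type} (le : A -> A -> Prop) (X : A -> Type)
  (p : forall a b, X b -> X a) : Type :=
  { x : forall a, X a | forall a b, le a b -> p a b (x b) = x a }.

Definition lim_top {A : Type} (le : A -> A -> Prop) (X : A -> Type)
  (p : forall a b, X b -> X a) (T : forall a, topology (X a))
  : topology (@Lim A le X p) :=
  fun V => exists U, prod_top T U /\ forall x : @Lim A le X p, V x <-> U (proj1_sig x).

Definition lim_proj {A : Type} (le : A -> A -> Prop) (X : A -> Type)
  (p : forall a b, X b -> X a) (a : A) (x : @Lim A le X p) : X a := proj1_sig x a.

Lemma lim_proj_cont {A : Type} (le : A -> A -> Prop) (X : A -> Type)
  (p : forall a b, X b -> X a) (T : forall a, topology (X a)) (a : A) :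
  continuous (@lim_top A le X p T) (T a) (@lim_proj A le X p a).
Proof.
  intros V HV. exists (fun y => V (y a)). split.
  - intros y Hy. exists (existT (fun a => X a -> Prop) a V :: nil). split.
    + intros q [<-|[]]. simpl. auto.
    + intros z Hz. apply (Hz _ (or_introl eq_refl)).
  - intros x. unfold lim_proj. tauto.
Qed.

Definition hJ {A : Type} (le : A -> A -> Prop) (X : A -> Type)
  (p : forall a b, X b -> X a) (T : forall a, topology (X a))
  (mu : CF (@lim_top A le X p T) -> R) : forall a, CF (T a) -> R :=
  fun a => Jmap (@lim_top A le X p T) (T a) (@lim_proj A le X p a) (@lim_proj_cont A le X p T a) mu.

Definition limJ {A : Type} (le : A -> A -> Prop) (X : A -> Type)
  (p : forall a b, X b -> X a) (T : forall a, topology (X a))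
  (pc : forall a b, le a b -> continuous (T b) (T a) (p a b))
  (m : forall a, CF (T a) -> R) : Prop :=
  (forall a, maxmin (T a) (m a)) /\
  (forall a b (hab : le a b), Jmap (T b) (T a) (p a b) (pc a b hab) (m b) = m a).

(* Main.v *)
Require Import Defs.
From Stdlib Require Import Reals List.
From Stdlib Require Import Lra Classical ClassicalEpsilon FunctionalExtensionality PropExtensionality ProofIrrelevance.
From HB Require Import structures.
From mathcomp Require all_boot all_order all_algebra finmap all_classical all_reals topology normedtype Rstruct Rstruct_topology.
Module Bridge.
Import all_boot all_order all_algebra finmap all_classical all_reals topology normedtype Rstruct Rstruct_topology.
Local Open Scope classical_set_scope.
Section S.
Variables (Y : Type) (TY : Defs.topology Y) (hT : is_topology TY).
Definition TT : Type := Y.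
HB.instance Definition _ := gen_eqMixin TT.
HB.instance Definition _ := gen_choiceMixin TT.
Lemma opT : TY setT. Proof. by case: hT. Qed.
Lemma opI : setI_closed TY.
Proof. move=> U V HU HV. by case: hT => _ [_ [H _]]; apply: H. Qed.
Lemma op_bigU : forall (I : Type) (f : I -> set TT), (forall i, TY (f i)) ->
    TY (\bigcup_i f i).
Proof.
move=> I f Hf. case: hT => _ [_ [_ H]].
have := H (fun U => exists i, U = f i).
have -> : (fun x => exists U, (exists i, U = f i) /\ U x) = \bigcup_i f i.
  apply/funext => x; apply/propext; split.
  by case=> U [[i ->] Hx]; exists i.
  by case=> i _ Hx; exists (f i); split=> //; exists i.
apply => U [i ->]; exact: Hf.
Qed.
HB.instance Definition _ := isOpenTopological.Build TT opT opI op_bigU.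

Lemma hausT : top_hausdorff TY -> hausdorff_space TT.
Proof.
move=> H; rewrite open_hausdorff => x y /eqP nxy.
have [U [V [oU [oV [Ux [Vy D]]]]]] := H x y nxy.
exists (U, V); first by rewrite !inE.
split => //; apply/eqP; apply/seteqP; split => z //= [Uz Vz].
exact: (D z (conj Uz Vz)).
Qed.

Lemma compT : top_compact TY -> compact [set: TT].
Proof.
move=> H F PF _.
have FF : Filter F by case: PF.
have [[x Hx]|N] := pselect (exists x : TT, cluster F x).
  by exists x.
exfalso.
have key : forall x : TT, exists U, TY U /\ U x /\ exists A, F A /\ (forall z, U z -> ~ A z).
  move=> x; have : ~ cluster F x by move=> c; apply: N; exists x.
  move=> /existsNP [A /existsNP [B /not_implyP [FA /not_implyP [nB AB]]]].
  case: nB => U [oU Ux UB]; exists U; split => //; split => //; exists A; split => //.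
  move=> z Uz Az; apply: AB; exists z; split => //; exact: UB.
have [l [Hl Hc]] := H (fun U => TY U /\ exists A, F A /\ (forall z, U z -> ~ A z))
  ltac:(by move=> U []) ltac:(by move=> x; have [U [oU [Ux HA]]] := key x; exists U).
have : F (fun z => forall U, List.In U l -> ~ U z).
  elim: l Hl {Hc} => [|U l IH] Hl.
    have FT : F setT by apply: filterT.
    by apply: (@filterS _ F _ setT) => // z _ U [].
  have [_ [A [FA AU]]] := Hl U (or_introl erefl).
  have FI := @filterI _ F FF _ _ FA (IH (fun V HV => Hl V (or_intror HV))).
  apply: (@filterS _ F FF _ _ _ FI) => z [Az Hz] V [<-|HV]; last exact: Hz.
  by move=> Uz; exact: (AU z Uz Az).
move=> /filter_ex [z Hz].
have [U [HU Uz]] := Hc z.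
exact: (Hz U HU Uz).
Qed.

Lemma closedT (F : set TT) : TY (fun y => ~ F y) -> closed F.
Proof. by move=> H; rewrite -[F]setCK closedC. Qed.

Lemma contT (f : TT -> R) : continuous f -> Defs.continuous TY R_top f.
Proof.
move/continuousP => H V HV.
apply: (H V).
rewrite openE => x Vx; rewrite /interior.
apply/nbhs_ballP.
have [e [e0 He]] := HV x Vx.
exists e; first by apply/RltP.
move=> y /= /RltP Hy; apply: He.
by rewrite Rabs_minus_sym.
Qed.

Lemma ury (hc : top_compact TY) (hh : top_hausdorff TY) (F1 F2 : Y -> Prop) :
  TY (fun y => ~ F1 y) -> TY (fun y => ~ F2 y) -> (forall y, F1 y -> F2 y -> False) ->
  exists u : Y -> R, Defs.continuous TY R_top u /\ (forall y, Rle 0 (u y) /\ Rle (u y) 1) /\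
     (forall y, F1 y -> u y = 1) /\ (forall y, F2 y -> u y = 0).
Proof.
move=> c1 c2 D.
have N := compact_normal (hausT hh) (compT hc).
have E : (F2 : set TT) `&` F1 = set0.
  by apply/seteqP; split => y // [a b]; exact: (D y b a).
have H := (proj1 (@normal_separatorP R TT) N (F2 : set TT) (F1 : set TT) (@closedT F2 c2) (@closedT F1 c1) E).
have [f [cf rf f0 f1]] := proj1 (@uniform_separatorP TT R _ _) H.
exists f; split; first exact: contT.
split.
  move=> y; have : `[0, 1]%classic (f y) by apply: rf; exists y.
  rewrite /= in_itv /= => /andP [/RleP a /RleP b]; split => //.
split.
  by move=> y Fy; have := f1 (f y) (ex_intro2 _ _ y Fy erefl).
by move=> y Fy; have := f0 (f y) (ex_intro2 _ _ y Fy erefl).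
Qed.
End S.

Lemma zorn_prop (S : Type) (s0 : S) (Rl : S -> S -> Prop) :
  (forall t, Rl t t) -> (forall r s t, Rl r s -> Rl s t -> Rl r t) ->
  (forall C : S -> Prop, (forall s t, C s -> C t -> Rl s t \/ Rl t s) ->
      exists t, forall s, C s -> Rl s t) ->
  exists t, forall s, Rl t s -> Rl s t.
Proof.
move=> h1 h2 h3.
have [t Ht] := @ZL_preorder S s0 (fun s t => `[< Rl s t >])
  ltac:(by move=> x; apply/asboolP) ltac:(by move=> r s u /asboolP a /asboolP b; apply/asboolP; exact: h2 a b)
  ltac:(move=> C HC; have [t Ht] := h3 C ltac:(by move=> s u Cs Cu; case: (HC s u Cs Cu) => /asboolP; auto);
        by exists t => s Cs; apply/asboolP; exact: Ht).
by exists t => s Hs; have /asboolP := Ht s (introT (asboolP _) Hs).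
Qed.
End Bridge.

From Corelib Require Import ssreflect.
Open Scope R_scope.

Section Gen.
Context {Y : Type} {TY : topology Y} (hT : is_topology TY).

Lemma pext (P Q : Y -> Prop) : (forall y, P y <-> Q y) -> P = Q.
Proof. move=> H; apply: functional_extensionality => y; apply: propositional_extensionality; exact: H. Qed.

Lemma top_ext {U V : Y -> Prop} : TY U -> (forall y, U y <-> V y) -> TY V.
Proof. by move=> HU /pext <-. Qed.

Lemma top_True : TY (fun _ => True). Proof. by case: hT. Qed.
Lemma top_False : TY (fun _ => False). Proof. by case: hT => _ []. Qed.
Lemma top_inter {U V : Y -> Prop} : TY U -> TY V -> TY (fun y => U y /\ V y).
Proof. by case: hT => _ [_ [H _]]; apply: H. Qed.
Lemma top_union {F : (Y -> Prop) -> Prop} : (forall U, F U -> TY U) ->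
  TY (fun y => exists U, F U /\ U y).
Proof. by case: hT => _ [_ [_ H]]; apply: H. Qed.

Lemma top_union2 {U V : Y -> Prop} : TY U -> TY V -> TY (fun y => U y \/ V y).
Proof.
move=> HU HV.
have H := @top_union (fun W => W = U \/ W = V) ltac:(by move=> W [->|->]).
apply: (top_ext H) => y; split.
  by case=> W [[->|->] Wy]; [left|right].
by case=> Wy; [exists U|exists V]; split; auto.
Qed.

Lemma top_local (U : Y -> Prop) :
  (forall y, U y -> exists V, TY V /\ V y /\ forall z, V z -> U z) -> TY U.
Proof.
move=> H.
have H2 := @top_union (fun V => TY V /\ forall z, V z -> U z) ltac:(by move=> V []).
apply: (top_ext H2) => y; split; first by case=> V [[_ HV] Vy]; exact: HV.
by move=> Uy; have [V [oV [Vy HV]]] := H y Uy; exists V.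
Qed.

Lemma top_const (P : Prop) : TY (fun _ => P).
Proof.
case: (classic P) => HP.
  by apply: (top_ext top_True).
by apply: (top_ext top_False).
Qed.

Lemma top_forall_fin (I : Type) (l : list I) (P : I -> Y -> Prop) :
  (forall i, In i l -> TY (P i)) -> TY (fun y => forall i, In i l -> P i y).
Proof.
elim: l => [|i l IH] H.
  by apply: (top_ext top_True) => y; split => // _ i [].
apply: (top_ext (top_inter (H i (or_introl eq_refl)) (IH (fun j Hj => H j (or_intror Hj))))).
move=> y; split; first by case=> A B j [<-|Hj]; [exact: A| exact: B].
by move=> Hy; split; [apply: Hy; left|move=> j Hj; apply: Hy; right].
Qed.

Lemma closed_forall (I : Type) (P : I -> Prop) (S : I -> Y -> Prop) :
  (forall i, P i -> TY (fun y => ~ S i y)) -> TY (fun y => ~ (forall i, P i -> S i y)).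
Proof.
move=> H.
have H2 := @top_union (fun U => exists i, P i /\ U = fun y => ~ S i y) ltac:(by move=> U [i [Pi ->]]; exact: H).
apply: (top_ext H2) => y; split.
  by case=> U [[i [Pi ->]] nS] Hy; apply: nS; apply: Hy.
move=> nH; apply: NNPP => nE; apply: nH => i Pi; apply: NNPP => nS.
by apply: nE; exists (fun y => ~ S i y); split => //; exists i.
Qed.

Lemma closed_and (S1 S2 : Y -> Prop) : TY (fun y => ~ S1 y) -> TY (fun y => ~ S2 y) ->
  TY (fun y => ~ (S1 y /\ S2 y)).
Proof.
move=> H1 H2; apply: (top_ext (top_union2 H1 H2)) => y.
split; first by case=> H [A B]; auto.
by move=> H; case: (classic (S1 y)) => A; [right=> B; apply: H|left].
Qed.

Lemma closed_compl (U : Y -> Prop) : TY U -> TY (fun y => ~ ~ U y).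
Proof. by move=> H; apply: (top_ext H) => y; split; [auto|apply: NNPP]. Qed.

Lemma hausdorff_single (hh : top_hausdorff TY) (y0 : Y) : TY (fun y => ~ y = y0).
Proof.
apply: top_local => y ny.
have [U [V [oU [oV [Uy [Vy0 D]]]]]] := hh y y0 ny.
exists U; split => //; split => // z Uz E; subst z.
exact: (D y0 (conj Uz Vy0)).
Qed.

End Gen.

Lemma compact_closed_cover {Y} (TY : topology Y) (hc : top_compact TY)
  (C : Y -> Prop) (F : (Y -> Prop) -> Prop) :
  TY (fun y => ~ C y) -> (forall U, F U -> TY U) -> (forall y, C y -> exists U, F U /\ U y) ->
  exists l, (forall U, In U l -> F U) /\ forall y, C y -> exists U, In U l /\ U y.
Proof.
move=> cC oF cov.
have [l [Hl Hc]] := hc (fun U => F U \/ U = fun y => ~ C y)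
  ltac:(by move=> U [/oF|->]) ltac:(by move=> y; case: (classic (C y)) => Cy;
      [have [U [FU Uy]] := cov y Cy; exists U; split; [left|]|exists (fun y => ~ C y); split; [right|]]).
suff [l' [H1 H2]] : exists l', (forall U, In U l' -> F U) /\
    forall y, C y -> (exists U, In U l /\ U y) -> exists U, In U l' /\ U y.
  by exists l'; split => // y Cy; apply: H2 => //; apply: Hc.
elim: l Hl {Hc} => [|V l IH] Hl.
  by exists nil; split => // y _ [V [[] _]].
have [l' [Hl' Hc']] := IH (fun W HW => Hl W (or_intror HW)).
case: (Hl V (or_introl eq_refl)) => [FV|EV].
  exists (V :: l'); split; first by move=> W [<-|HW]; [|exact: Hl'].
  move=> y Cy [W [[E|HW] Wy]]; first by subst W; exists V; split => //; left.
  by have [W' [HW' W'y]] := Hc' y Cy (ex_intro _ W (conj HW Wy)); exists W'; split => //; right.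
exists l'; split => // y Cy [W [[E|HW] Wy]].
  by subst W V; case: (Wy Cy).
exact: (Hc' y Cy (ex_intro _ W (conj HW Wy))).
Qed.

Lemma Rmax_lip (a b c d : R) : Rabs (Rmax a b - Rmax c d) <= Rmax (Rabs (a - c)) (Rabs (b - d)).
Proof. unfold Rmax, Rabs; repeat destruct Rcase_abs; repeat destruct Rle_dec; lra. Qed.
Lemma Rmin_lip (a b c d : R) : Rabs (Rmin a b - Rmin c d) <= Rmax (Rabs (a - c)) (Rabs (b - d)).
Proof. unfold Rmin, Rmax, Rabs; repeat destruct Rcase_abs; repeat destruct Rle_dec; lra. Qed.
Lemma Rmax_cases (a b : R) : Rmax a b = a \/ Rmax a b = b.
Proof. unfold Rmax; destruct Rle_dec; auto. Qed.
Lemma Rmax_ge_l (a b : R) : a <= Rmax a b. Proof. unfold Rmax; destruct Rle_dec; lra. Qed.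
Lemma Rmax_ge_r (a b : R) : b <= Rmax a b. Proof. unfold Rmax; destruct Rle_dec; lra. Qed.
Lemma Rmax_lub (a b c : R) : a <= c -> b <= c -> Rmax a b <= c. Proof. unfold Rmax; destruct Rle_dec; lra. Qed.
Lemma Rmin_le_l (a b : R) : Rmin a b <= a. Proof. unfold Rmin; destruct Rle_dec; lra. Qed.
Lemma Rmin_le_r (a b : R) : Rmin a b <= b. Proof. unfold Rmin; destruct Rle_dec; lra. Qed.

Lemma R_top_lip (g : R -> R) (L : R) : 0 <= L ->
  (forall x y, Rabs (g x - g y) <= L * Rabs (x - y)) ->
  forall V, R_top V -> R_top (fun x => V (g x)).
Proof.
move=> hL hg V HV x Vx.
have [e [he He]] := HV (g x) Vx.
exists (e / (L + 1)); split.
  apply: Rdiv_lt_0_compat; lra.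
move=> y Hy; apply: He.
have E : e / (L + 1) * (L + 1) = e by field; lra.
have := hg y x.
have := Rabs_pos (y - x).
nra.
Qed.

Lemma R_ball_open (c e : R) : R_top (fun r => Rabs (r - c) < e).
Proof.
move=> r Hr; exists (e - Rabs (r - c)); split; first lra.
move=> s Hs; have := Rabs_triang (s - r) (r - c).
replace (s - r + (r - c)) with (s - c) by ring; lra.
Qed.

Lemma R_abs_open (c : R) : R_top (fun r => Rabs r < c).
Proof.
move=> r Hr; exists (c - Rabs r); split; first lra.
move=> s Hs; have := Rabs_triang (s - r) r.
replace (s - r + r) with s by ring; lra.
Qed.

Lemma R_lt_open (c : R) : R_top (fun r => r < c).
Proof.
move=> r Hr; exists (c - r); split; first lra.
move=> s Hs; move: Hs; unfold Rabs; destruct Rcase_abs; lra.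
Qed.

Lemma R_gt_open (c : R) : R_top (fun r => c < r).
Proof.
move=> r Hr; exists (r - c); split; first lra.
move=> s Hs; move: Hs; unfold Rabs; destruct Rcase_abs; lra.
Qed.

Section GenR.
Context {Y : Type} (TY : topology Y) (hT : is_topology TY).

Lemma cont_lip (phi : Y -> R) (g : R -> R) (L : R) : 0 <= L ->
  (forall x y, Rabs (g x - g y) <= L * Rabs (x - y)) ->
  continuous TY R_top phi -> continuous TY R_top (fun y => g (phi y)).
Proof. move=> hL hg hphi V HV; exact: (hphi _ (R_top_lip g L hL hg V HV)). Qed.

Lemma cont_const (c : R) : continuous TY R_top (fun _ => c).
Proof. move=> V HV; exact: top_const. Qed.

Lemma cont_max (f g : Y -> R) : continuous TY R_top f -> continuous TY R_top g ->
  continuous TY R_top (fun y => Rmax (f y) (g y)).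
Proof.
move=> hf hg V HV; apply: (top_local hT) => y Vy.
have [e [he He]] := HV _ Vy.
exists (fun z => Rabs (f z - f y) < e /\ Rabs (g z - g y) < e); split.
  apply: (top_inter hT); [exact: (hf _ (R_ball_open _ _))|exact: (hg _ (R_ball_open _ _))].
split; first by rewrite !Rminus_diag Rabs_R0.
move=> z [h1 h2]; apply: He.
have := Rmax_lip (f z) (g z) (f y) (g y).
have := Rmax_lub _ _ e (Rlt_le _ _ h1) (Rlt_le _ _ h2).
move: h1 h2; unfold Rmax; repeat destruct Rle_dec; lra.
Qed.

Lemma cont_comp {Z} (TZ : topology Z) (f : Z -> Y) (phi : Y -> R) :
  continuous TZ TY f -> continuous TY R_top phi -> continuous TZ R_top (fun z => phi (f z)).
Proof. move=> hf hphi V HV; exact: (hf _ (hphi _ HV)). Qed.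

Lemma open_lt (f g : Y -> R) : continuous TY R_top f -> continuous TY R_top g ->
  TY (fun y => f y < g y).
Proof.
move=> hf hg; apply: (top_local hT) => y Hy.
set e := (g y - f y) / 2.
exists (fun z => Rabs (f z - f y) < e /\ Rabs (g z - g y) < e); split.
  apply: (top_inter hT); [exact: (hf _ (R_ball_open _ _))|exact: (hg _ (R_ball_open _ _))].
split; first by rewrite !Rminus_diag Rabs_R0; split; rewrite /e; lra.
move=> z [h1 h2]; move: h1 h2; rewrite /e; unfold Rabs; repeat destruct Rcase_abs; lra.
Qed.

Lemma bounded (hc : top_compact TY) (phi : Y -> R) : continuous TY R_top phi ->
  exists M, forall y, Rabs (phi y) <= M.
Proof.
move=> hphi.
have [l [Hl Hc]] := hc (fun W => exists n : nat, W = fun y => Rabs (phi y) < INR n)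
  ltac:(by move=> W [n ->]; exact: (hphi (fun r => Rabs r < INR n) (R_abs_open _)))
  ltac:(by move=> y; have [n Hn] := INR_unbounded (Rabs (phi y)); exists (fun y => Rabs (phi y) < INR n); split; [exists n|lra]).
suff [M HM] : exists M, forall y, (exists W, In W l /\ W y) -> Rabs (phi y) <= M.
  by exists M => y; apply: HM; apply: Hc.
elim: l Hl {Hc} => [|W l IH] Hl.
  by exists 0 => y [W [[] _]].
have [M HM] := IH (fun V HV => Hl V (or_intror HV)).
have [n En] := Hl W (or_introl eq_refl).
exists (Rmax M (INR n)) => y [V [[E|HV] Vy]].
  subst V W; have := Rmax_ge_r M (INR n); lra.
have := HM y (ex_intro _ V (conj HV Vy)); have := Rmax_ge_l M (INR n); lra.
Qed.

End GenR.

Lemma image_closed {Z Y} (TZ : topology Z) (TY : topology Y) (hY : is_topology TY)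
  (hc : top_compact TZ) (hh : top_hausdorff TY) (f : Z -> Y) (hf : continuous TZ TY f)
  (C : Z -> Prop) : TZ (fun z => ~ C z) -> TY (fun y => ~ exists z, C z /\ f z = y).
Proof.
move=> hC; apply: (top_local hY) => y ny.
pose Fm := fun W : Z -> Prop => W = (fun z => ~ C z) \/ exists U V, TY U /\ TY V /\ V y /\
      (forall w, ~ (U w /\ V w)) /\ W = fun z => U (f z).
have opF : forall W, Fm W -> TZ W.
  by move=> W [->|[U [V [oU [_ [_ [_ ->]]]]]]]; [|exact: hf].
have cov : forall z, exists W, Fm W /\ W z.
  move=> z; case: (classic (C z)) => Cz; last by exists (fun z => ~ C z); split; [left|].
  have nfz : f z <> y by move=> E; apply: ny; exists z.
  have [U [V [oU [oV [Ufz [Vy D]]]]]] := hh _ _ nfz.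
  by exists (fun z => U (f z)); split => //; right; exists U, V.
have [l [Hl Hc]] := hc Fm opF cov.
suff [V [oV [Vy HV]]] : exists V, TY V /\ V y /\ forall z, C z -> (exists W, In W l /\ W z) -> ~ V (f z).
  exists V; split => //; split => // y' Vy' [z [Cz E]]; subst y'.
  exact: (HV z Cz (Hc z) Vy').
elim: l Hl {Hc} => [|W l IH] Hl.
  by exists (fun _ => True); split; [exact: top_True|split => // z _ [W [[] _]]].
have [V0 [oV0 [V0y H0]]] := IH (fun V HV => Hl V (or_intror HV)).
case: (Hl W (or_introl eq_refl)) => [EW|[U [V [oU [oV [Vy [D EW]]]]]]].
  exists V0; split => //; split => // z Cz [W' [[E|HW] W'z]].
    by subst W' W; case: W'z.
  exact: (H0 z Cz (ex_intro _ W' (conj HW W'z))).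
exists (fun w => V0 w /\ V w); split; first exact: top_inter.
split => // z Cz [W' [[E|HW] W'z]] [A B].
  by subst W' W; exact: (D (f z) (conj W'z B)).
exact: (H0 z Cz (ex_intro _ W' (conj HW W'z)) A).
Qed.

Section MM.
Context {Y : Type} (TY : topology Y) (hT : is_topology TY).

Definition cfmk (f : Y -> R) (h : continuous TY R_top f) : CF TY := exist _ f h.

Lemma cf_cont (phi : CF TY) : continuous TY R_top (proj1_sig phi).
Proof. exact: proj2_sig phi. Qed.

Variable mu : CF TY -> R.
Hypothesis hmu : maxmin TY mu.

Lemma mm_const (phi : CF TY) (c : R) : (forall y, proj1_sig phi y = c) -> mu phi = c.
Proof. by case: hmu => H _; apply: H. Qed.

Lemma mm_max (phi psi chi : CF TY) :
  (forall x, proj1_sig chi x = Rmax (proj1_sig phi x) (proj1_sig psi x)) ->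
  mu chi = Rmax (mu phi) (mu psi).
Proof. by case: hmu => _ [H _]; apply: H. Qed.

Lemma mm_min (c : R) (phi chi : CF TY) :
  (forall x, proj1_sig chi x = Rmin c (proj1_sig phi x)) -> mu chi = Rmin c (mu phi).
Proof. by case: hmu => _ [_ H]; apply: H. Qed.

Lemma mm_ext (phi psi : CF TY) : (forall y, proj1_sig phi y = proj1_sig psi y) -> mu phi = mu psi.
Proof.
move=> H; rewrite (mm_max phi phi psi).
  by unfold Rmax; destruct Rle_dec.
by move=> x; rewrite -H; unfold Rmax; destruct Rle_dec.
Qed.

Lemma mm_mono (phi psi : CF TY) : (forall y, proj1_sig phi y <= proj1_sig psi y) -> mu phi <= mu psi.
Proof.
move=> H; rewrite (mm_max phi psi psi); first exact: Rmax_ge_l.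
by move=> x; have := H x; unfold Rmax; destruct Rle_dec; lra.
Qed.

Hypothesis hc : top_compact TY.
Hypothesis hh : top_hausdorff TY.

Lemma lip_aff (lo k : R) : 0 <= k -> forall x y, Rabs ((lo + k * x) - (lo + k * y)) <= k * Rabs (x - y).
Proof.
move=> hk x y; replace (lo + k * x - (lo + k * y)) with (k * (x - y)) by ring.
rewrite Rabs_mult (Rabs_pos_eq k hk); lra.
Qed.
Lemma lip_min (c : R) : forall x y, Rabs (Rmin c x - Rmin c y) <= 1 * Rabs (x - y).
Proof. move=> x y; unfold Rmin, Rabs; repeat destruct Rcase_abs; repeat destruct Rle_dec; lra. Qed.
Lemma lip_maxc (c : R) : forall x y, Rabs (Rmax x c - Rmax y c) <= 1 * Rabs (x - y).
Proof. move=> x y; unfold Rmax, Rabs; repeat destruct Rcase_abs; repeat destruct Rle_dec; lra. Qed.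
Lemma lip_shift (e : R) : forall x y, Rabs ((x + e) - (y + e)) <= 1 * Rabs (x - y).
Proof. move=> x y; replace (x + e - (y + e)) with (x - y) by ring; lra. Qed.

Lemma mm_shift (psi psie : CF TY) (eps : R) : 0 <= eps ->
  (forall y, proj1_sig psie y = proj1_sig psi y + eps) -> mu psie <= mu psi + eps.
Proof.
move=> he Hpe.
set a := mu psi.
suff H : forall d, 0 < d -> mu psie <= a + eps + 2 * d.
  case: (Rle_dec (mu psie) (a + eps)) => // Hn.
  have := H ((mu psie - a - eps) / 4) ltac:(lra); lra.
move=> d hd.
have [M HM] := bounded TY hc _ (cf_cont psi).
pose F1 := fun y => a + 2 * d <= proj1_sig psi y.
pose F2 := fun y => proj1_sig psi y <= a + d.
have c1 : TY (fun y => ~ F1 y).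
  apply: (top_ext (cf_cont psi _ (R_lt_open (a + 2 * d)))) => y; rewrite /F1; split.
    by move=> ? ?; lra.
  by move/Rnot_le_lt.
have c2 : TY (fun y => ~ F2 y).
  apply: (top_ext (cf_cont psi _ (R_gt_open (a + d)))) => y; rewrite /F2; split.
    by move=> ? ?; lra.
  by move/Rnot_le_lt.
have [u [cu [u01 [u1 u0]]]] := Bridge.ury Y TY hT hc hh F1 F2 c1 c2
  ltac:(by move=> y; rewrite /F1 /F2; lra).
have HM' : forall y, Rabs (proj1_sig psi y) <= Rabs M.
  by move=> y; have := HM y; have := Rle_abs M; lra.
set lo := - Rabs M.
set hi := Rabs M + eps + 1.
have hk : 0 <= hi - lo by rewrite /hi /lo; have := Rabs_pos M; lra.
pose T := cfmk (fun y => lo + (hi - lo) * u y) (cont_lip TY u _ (hi - lo) hk (lip_aff lo (hi - lo) hk) cu).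
pose Tmin := cfmk (fun y => Rmin (a + d) (proj1_sig T y))
   (cont_lip TY _ (Rmin (a + d)) 1 ltac:(lra) (lip_min _) (cf_cont T)).
have H1 : mu Tmin = Rmin (a + d) (mu T) by apply: mm_min.
have H2 : mu Tmin <= a.
  apply: mm_mono => y /=.
  case: (Rle_dec (a + d) (proj1_sig psi y)) => Hy.
    have := Rmin_le_l (a + d) (lo + (hi - lo) * u y); lra.
  have Hu : u y = 0 by apply: u0; rewrite /F2; lra.
  rewrite Hu; have := Rmin_le_r (a + d) (lo + (hi - lo) * 0).
  have := HM' y; rewrite /lo; unfold Rabs at 1; destruct Rcase_abs; lra.
have H3 : mu T <= a by move: H1 H2; unfold Rmin; destruct Rle_dec; lra.
pose C := cfmk (fun _ => a + 2 * d + eps) (cont_const TY hT _).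
pose Tmax := cfmk (fun y => Rmax (proj1_sig T y) (a + 2 * d + eps))
   (cont_lip TY _ (fun r => Rmax r (a + 2 * d + eps)) 1 ltac:(lra) (lip_maxc _) (cf_cont T)).
have H4 : mu Tmax = Rmax (mu T) (mu C) by apply: mm_max.
have H5 : mu C = a + 2 * d + eps by apply: mm_const.
have H6 : mu psie <= mu Tmax.
  apply: mm_mono => y /=; rewrite Hpe.
  case: (Rle_dec (a + 2 * d) (proj1_sig psi y)) => Hy.
    have Hu : u y = 1 by apply: u1.
    rewrite Hu; have := Rmax_ge_l (lo + (hi - lo) * 1) (a + 2 * d + eps).
    have := HM' y; rewrite /lo /hi; unfold Rabs at 1; destruct Rcase_abs; lra.
  have := Rmax_ge_r (lo + (hi - lo) * u y) (a + 2 * d + eps); lra.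
rewrite H4 H5 in H6.
have := Rmax_lub (mu T) (a + 2 * d + eps) (a + 2 * d + eps) ltac:(lra) ltac:(lra); lra.
Qed.

Lemma mm_lip (phi psi : CF TY) (eps : R) : 0 <= eps ->
  (forall y, proj1_sig phi y <= proj1_sig psi y + eps) -> mu phi <= mu psi + eps.
Proof.
move=> he H.
pose psie := cfmk (fun y => proj1_sig psi y + eps) (cont_lip TY _ (fun r => r + eps) 1 ltac:(lra) (lip_shift eps) (cf_cont psi)).
have := mm_shift psi psie eps he (fun y => eq_refl).
have := mm_mono phi psie H; lra.
Qed.

Lemma mm_bounds (phi : CF TY) (lo hi : R) : (forall y, lo <= proj1_sig phi y <= hi) ->
  lo <= mu phi <= hi.
Proof.
move=> H; split.
  have := mm_mono (cfmk (fun _ => lo) (cont_const TY hT _)) phi (fun y => proj1 (H y)).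
  by rewrite (mm_const (cfmk (fun _ => lo) (cont_const TY hT _)) lo (fun _ => eq_refl)).
have := mm_mono phi (cfmk (fun _ => hi) (cont_const TY hT _)) (fun y => proj2 (H y)).
by rewrite (mm_const (cfmk (fun _ => hi) (cont_const TY hT _)) hi (fun _ => eq_refl)).
Qed.

End MM.

Section Limit.
Variables (A : Type) (le : A -> A -> Prop) (X : A -> Type) (T : forall a, topology (X a))
  (p : forall a b, X b -> X a).
Hypothesis hdir : directed le.
Hypothesis htop : forall a, is_topology (T a).
Hypothesis hcomp : forall a, top_compact (T a).
Hypothesis hhaus : forall a, top_hausdorff (T a).
Hypothesis pc : forall a b, le a b -> continuous (T b) (T a) (p a b).
Hypothesis hsys : inv_system le X p.

Local Notation L := (@Lim A le X p).
Local Notation TL := (@lim_top A le X p T).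

Lemma le_refl a : le a a. Proof. by case: hdir. Qed.
Lemma le_tr {a b c} : le a b -> le b c -> le a c. Proof. by case: hdir => _ [H _]; apply: H. Qed.
Lemma le_ub a b : exists c, le a c /\ le b c. Proof. by case: hdir => _ [_ H]. Qed.
Lemma p_id a x : p a a x = x. Proof. by case: hsys. Qed.
Lemma p_comp a b c x : le a b -> le b c -> p a b (p b c x) = p a c x.
Proof. by case: hsys => _ H; apply: H. Qed.
Lemma thr (x : L) a b : le a b -> p a b (proj1_sig x b) = proj1_sig x a.
Proof. exact: (proj2_sig x a b). Qed.

Lemma ub_list (a0 : A) (l : list A) : exists c, le a0 c /\ forall a, In a l -> le a c.
Proof.
elim: l => [|a l [c [h0 hc]]]; first by exists a0; split => //; apply: le_refl.
have [d [h1 h2]] := le_ub a c.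
exists d; split; first exact: le_tr h0 h2.
move=> b [E|Hb]; first by subst b.
exact: le_tr (hc b Hb) h2.
Qed.

Definition closedb b (S : X b -> Prop) := T b (fun y => ~ S y).
Definition subsys (Y : forall b, X b -> Prop) := forall b c y, le b c -> Y c y -> Y b (p b c y).

Section ImgSys.
Variables (a0 : A) (Q : forall c, X c -> Prop).
Hypothesis Qcl : forall c, le a0 c -> closedb c (Q c).
Hypothesis Qsub : forall c c' w, le a0 c -> le c c' -> Q c' w -> Q c (p c c' w).
Hypothesis Qne : forall c, le a0 c -> exists w, Q c w.

Definition imgs b z := forall c, le a0 c -> le b c -> exists w, Q c w /\ p b c w = z.

Lemma imgs_closed b : closedb b (imgs b).
Proof.
have H := closed_forall (htop b) _ (fun c => le a0 c /\ le b c) (fun c z => exists w, Q c w /\ p b c w = z)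
  ltac:(by move=> c [h0 h1]; apply: image_closed; [exact: htop|exact: hcomp|exact: hhaus|exact: pc|exact: Qcl]).
apply: (top_ext H) => z /=; firstorder.
Qed.

Lemma imgs_ne b : exists z, imgs b z.
Proof.
apply: NNPP => H.
pose Fm := fun U : X b -> Prop => exists c, le a0 c /\ le b c /\ U = fun z => ~ exists w, Q c w /\ p b c w = z.
have opF : forall U, Fm U -> T b U.
  move=> U [c [h0 [h1 ->]]]; apply: image_closed; [exact: htop|exact: hcomp|exact: hhaus|exact: pc|exact: Qcl].
have cov : forall z, exists U, Fm U /\ U z.
  move=> z; have : ~ imgs b z by move=> Hz; apply: H; exists z.
  move/not_all_ex_not => [c Hc].
  have [h0 Hc2] := imply_to_and _ _ Hc.
  have [h1 nE] := imply_to_and _ _ Hc2.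
  by exists (fun z => ~ exists w, Q c w /\ p b c w = z); split => //; exists c.
have [l [Hl Hc]] := hcomp b Fm opF cov.
suff [d [h0 [h1 Hd]]] : exists d, le a0 d /\ le b d /\ forall U, In U l -> forall w, Q d w -> ~ U (p b d w).
  have [w Qw] := Qne d h0.
  have [U [HU Uz]] := Hc (p b d w).
  exact: (Hd U HU w Qw Uz).
elim: l Hl {Hc} => [|U l IH] Hl.
  by have [d [h0 h1]] := le_ub a0 b; exists d; split => //; split => // U [].
have [d [h0 [h1 Hd]]] := IH (fun V HV => Hl V (or_intror HV)).
have [c [hc0 [hc1 EU]]] := Hl U (or_introl eq_refl).
have [e [hce hde]] := le_ub c d.
exists e; split; first exact: le_tr h0 hde.
split; first exact: le_tr h1 hde.
move=> V [E|HV] w Qw; last first.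
  have := Hd V HV (p d e w) (Qsub d e w h0 hde Qw).
  by rewrite p_comp.
subst V U => Hn; apply: Hn; exists (p c e w); split; first exact: Qsub.
by rewrite p_comp.
Qed.

Lemma imgs_sub : subsys imgs.
Proof.
move=> b c y hbc Hy c' h0 hbc'.
have [e [hce hc'e]] := le_ub c c'.
have [w [Qw Ew]] := Hy e (le_tr h0 hc'e) hce.
exists (p c' e w); split; first exact: Qsub.
rewrite p_comp // -Ew p_comp //; exact: le_tr hbc' hc'e.
Qed.

Lemma imgs_Q b z : imgs b z -> exists c, le a0 c /\ le b c /\ exists w, Q c w /\ p b c w = z.
Proof.
move=> H; have [c [h0 h1]] := le_ub a0 b.
by exists c; split => //; split => //; apply: H.
Qed.

End ImgSys.

Section TH.
Variables (a0 : A) (Y0 : forall b, X b -> Prop).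
Hypothesis Y0cl : forall b, closedb b (Y0 b).
Hypothesis Y0ne : forall b, exists z, Y0 b z.
Hypothesis Y0sub : subsys Y0.

Definition good (Y : forall b, X b -> Prop) :=
  (forall b, closedb b (Y b)) /\ (forall b, exists z, Y b z) /\ subsys Y /\ (forall b z, Y b z -> Y0 b z).
Definition GS := {Y | good Y}.
Definition Rl (s t : GS) := forall b z, proj1_sig t b z -> proj1_sig s b z.

Definition SI b (i : option GS) : X b -> Prop :=
  match i with None => Y0 b | Some s => proj1_sig s b end.

Lemma chain_ub (C : GS -> Prop) : (forall s t, C s -> C t -> Rl s t \/ Rl t s) ->
  exists t, forall s, C s -> Rl s t.
Proof.
move=> HC.
pose PI := fun i : option GS => match i with None => True | Some s => C s end.
pose Yt := fun b z => forall i, PI i -> SI b i z.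
have SIcl : forall b i, closedb b (SI b i).
  by move=> b [s|] /=; [case: (proj2_sig s) => H _; apply: H|apply: Y0cl].
have SIne : forall b i, exists z, SI b i z.
  by move=> b [s|] /=; [case: (proj2_sig s) => _ [H _]; apply: H|apply: Y0ne].
have SIsub : forall i, subsys (fun b => SI b i).
  by move=> [s|] /=; [case: (proj2_sig s) => _ [_ [H _]]; apply: H|apply: Y0sub].
have SI0 : forall b i z, SI b i z -> Y0 b z.
  by move=> b [s|] z /=; [case: (proj2_sig s) => _ [_ [_ H]]; apply: H|].
have comp : forall b i j, PI i -> PI j ->
    (forall z, SI b i z -> SI b j z) \/ (forall z, SI b j z -> SI b i z).
  move=> b [s|] [t|] /= Pi Pj.
  - by case: (HC s t Pi Pj) => H; [right|left] => z; apply: H.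
  - by left => z; apply: (SI0 b (Some s)).
  - by right => z; apply: (SI0 b (Some t)).
  - by left.
have gYt : good Yt.
  split.
    move=> b; have H := closed_forall (htop b) _ PI (SI b) (fun i _ => SIcl b i).
    by apply: (top_ext H).
  split.
    move=> b; apply: NNPP => Hn.
    pose Fm := fun U : X b -> Prop => exists i, PI i /\ U = fun z => ~ SI b i z.
    have opF : forall U, Fm U -> T b U by move=> U [i [_ ->]]; apply: SIcl.
    have cov : forall z, exists U, Fm U /\ U z.
      move=> z; have : ~ Yt b z by move=> Hz; apply: Hn; exists z.
      move/not_all_ex_not => [i Hi].
      have [Pi nS] := imply_to_and _ _ Hi.
      by exists (fun z => ~ SI b i z); split => //; exists i.
    have [l [Hl Hc]] := hcomp b Fm opF cov.
    suff [i [Pi Hi]] : exists i, PI i /\ forall U, In U l -> forall z, SI b i z -> ~ U z.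
      have [z Hz] := SIne b i.
      have [U [HU Uz]] := Hc z.
      exact: (Hi U HU z Hz Uz).
    elim: l Hl {Hc} => [|U l IH] Hl.
      by exists None; split => // U [].
    have [i [Pi Hi]] := IH (fun V HV => Hl V (or_intror HV)).
    have [j [Pj EU]] := Hl U (or_introl eq_refl).
    case: (comp b i j Pi Pj) => Hij.
      exists i; split => // V [E|HV] z Hz; last exact: Hi V HV z Hz.
      by subst V U => H; apply: H; apply: Hij.
    exists j; split => // V [E|HV] z Hz; last exact: Hi V HV z (Hij z Hz).
    by subst V U => H; apply: H.
  split.
    move=> b c y hbc Hy i Pi; apply: (SIsub i) => //; exact: Hy.
  move=> b z Hz; exact: (Hz None I).
exists (exist _ Yt gYt) => s Cs b z /= Hz.
exact: (Hz (Some s) Cs).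
Qed.

Lemma good0 : good Y0.
Proof. by split => //; split => //; split. Qed.

Lemma thread_exists : exists x : L, forall b, Y0 b (proj1_sig x b).
Proof.
have [t Ht] := Bridge.zorn_prop GS (exist _ Y0 good0) Rl
  ltac:(by move=> s b z) ltac:(by move=> r s u H1 H2 b z Hz; apply: H1; apply: H2) chain_ub.
case: t Ht => Yt gt /= Ht.
have [Ycl [Yne [Ysub Y0s]]] := gt.
have good1 : good (imgs a0 Yt).
  have Qcl : forall c, le a0 c -> closedb c (Yt c) by move=> c _; apply: Ycl.
  have Qsub : forall c c' w, le a0 c -> le c c' -> Yt c' w -> Yt c (p c c' w) by move=> c c' w _; apply: Ysub.
  have Qne : forall c, le a0 c -> exists w, Yt c w by move=> c _; apply: Yne.
  split; first by move=> b; apply: imgs_closed.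
  split; first by move=> b; apply: imgs_ne.
  split; first by apply: imgs_sub.
  move=> b z /imgs_Q [c [_ [hbc [w [Yw <-]]]]]; apply: Y0s; exact: Ysub.
have S1 : forall b z, Yt b z -> imgs a0 Yt b z.
  have := Ht (exist _ _ good1); rewrite /Rl /=; apply.
  move=> b z /imgs_Q [c [_ [hbc [w [Yw <-]]]]]; exact: Ysub.
have uniq : forall b0 y0 z, Yt b0 y0 -> Yt b0 z -> z = y0.
  move=> b0 y0 z Hy0 Hz.
  pose Q := fun c w => Yt c w /\ p b0 c w = y0.
  have Qcl : forall c, le b0 c -> closedb c (Q c).
    move=> c hc; apply: closed_and; [exact: htop|exact: Ycl|].
    apply: (top_ext (pc b0 c hc _ (hausdorff_single (htop b0) (hhaus b0) y0))) => w.
    split; [move=> H1 H2; exact: H1 H2|move=> H1 H2; exact: H1 H2].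
  have Qsub : forall c c' w, le b0 c -> le c c' -> Q c' w -> Q c (p c c' w).
    move=> c c' w h0 h1 [Yw Ew]; split; first exact: Ysub.
    by rewrite p_comp.
  have Qne : forall c, le b0 c -> exists w, Q c w.
    move=> c hc; have [e [hae hce]] := le_ub a0 c.
    have [w [Yw Ew]] := S1 b0 y0 Hy0 e hae (le_tr hc hce).
    exists (p c e w); split; first exact: Ysub.
    by rewrite p_comp.
  have good2 : good (imgs b0 Q).
    split; first by move=> b; apply: imgs_closed.
    split; first by move=> b; apply: imgs_ne.
    split; first by apply: imgs_sub.
    move=> b w /(imgs_Q b0 Q) [c [_ [hbc [v [[Yv _] <-]]]]]; apply: Y0s; exact: Ysub.
  have S2 : forall b z, Yt b z -> imgs b0 Q b z.
    have := Ht (exist _ _ good2); rewrite /Rl /=; apply.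
    move=> b w /(imgs_Q b0 Q) [c [_ [hbc [v [[Yv _] <-]]]]]; exact: Ysub.
  have [w [[_ Ew] Ew']] := S2 b0 z Hz b0 (le_refl b0) (le_refl b0).
  by rewrite -Ew' -Ew.
pose x := fun b => proj1_sig (constructive_indefinite_description _ (Yne b)).
have xY : forall b, Yt b (x b) by move=> b; exact: (proj2_sig (constructive_indefinite_description _ (Yne b))).
have xthr : forall a b, le a b -> p a b (x b) = x a.
  move=> a b hab; apply: (uniq a); [exact: xY|exact: Ysub].
exists (exist _ x xthr) => b /=; apply: Y0s; exact: xY.
Qed.

End TH.


Lemma N_lemma (a : A) (K : X a -> Prop) : closedb a K ->
  (forall x : L, ~ K (proj1_sig x a)) -> exists b, le a b /\ forall w, ~ K (p a b w).
Proof.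
move=> hK Hx; apply: NNPP => Hn.
have Hb : forall b, le a b -> exists w, K (p a b w).
  move=> b hab; apply: NNPP => H; apply: Hn; exists b; split => // w Kw; apply: H; by exists w.
pose Q := fun c w => K (p a c w).
have Qcl : forall c, le a c -> closedb c (Q c).
  by move=> c hc; exact: (pc a c hc _ hK).
have Qsub : forall c c' w, le a c -> le c c' -> Q c' w -> Q c (p c c' w).
  by move=> c c' w h0 h1; rewrite /Q p_comp.
have [x Hx'] := thread_exists a (imgs a Q) (fun b => imgs_closed a Q Qcl Qsub b)
  (fun b => imgs_ne a Q Qcl Qsub Hb b) (imgs_sub a Q Qsub).
have [w [Qw Ew]] := Hx' a a (le_refl a) (le_refl a).
apply: (Hx x); rewrite -Ew; move: Qw; rewrite /Q p_id //.
Qed.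


Section NE.
Variable a0 : A.
Hypothesis hXc : top_compact TL.

Lemma basic_nbhd (V : L -> Prop) : TL V -> forall x : L, V x ->
  exists c (O : X c -> Prop), T c O /\ O (proj1_sig x c) /\ forall y : L, O (proj1_sig y c) -> V y.
Proof.
move=> [U [hU HV]] x Vx.
have Ux := proj1 (HV x) Vx.
have [l [Hl Hs]] := hU _ Ux.
have [c [_ hc]] := ub_list a0 (map (@projT1 _ _) l).
have hq : forall q, In q l -> le (projT1 q) c by move=> q Hq; apply: hc; apply: in_map.
exists c, (fun z => forall q, In q l -> projT2 q (p (projT1 q) c z)).
split.
  apply: (top_forall_fin (htop c)) => q Hq.
  exact: (pc _ _ (hq q Hq) _ (proj1 (Hl q Hq))).
split.
  by move=> q Hq; rewrite thr; [exact: (proj2 (Hl q Hq))|exact: hq].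
move=> y Hy; apply/HV; apply: Hs => q Hq.
by rewrite -(thr y (projT1 q) c (hq q Hq)); apply: Hy.
Qed.

Lemma clopen_fin (W : L -> Prop) : TL W -> TL (fun x => ~ W x) ->
  exists c (O : X c -> Prop), T c O /\ forall x : L, W x <-> O (proj1_sig x c).
Proof.
move=> oW cW.
pose Fm := fun U : L -> Prop => exists c (O : X c -> Prop), T c O /\
   (forall y : L, O (proj1_sig y c) -> W y) /\ U = fun y => O (proj1_sig y c).
have opF : forall U, Fm U -> TL U.
  by move=> U [c [O [hO [_ ->]]]]; exact: (lim_proj_cont le X p T c O hO).
have cov : forall y, W y -> exists U, Fm U /\ U y.
  move=> y Wy; have [c [O [hO [Oy HO]]]] := basic_nbhd W oW y Wy.
  by exists (fun y => O (proj1_sig y c)); split => //; exists c, O.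
have [l [Hl Hc]] := compact_closed_cover TL hXc W Fm cW opF cov.
suff [c [O [hO [H1 H2]]]] : exists c (O : X c -> Prop), T c O /\ (forall y : L, O (proj1_sig y c) -> W y) /\
    forall y : L, (exists U, In U l /\ U y) -> O (proj1_sig y c).
  exists c, O; split => // x; split; [move=> Wx; apply: H2; exact: Hc|exact: H1].
elim: l Hl {Hc} => [|U l IH] Hl.
  by exists a0, (fun _ => False); split; [exact: top_False|split => // y [U [[] _]]].
have [c [O [hO [H1 H2]]]] := IH (fun V HV => Hl V (or_intror HV)).
have [c1 [O1 [hO1 [H11 EU]]]] := Hl U (or_introl eq_refl).
have [e [h1 h2]] := le_ub c1 c.
exists e, (fun z => O1 (p c1 e z) \/ O (p c e z)); split.
  apply: (top_union2 (htop e)); [exact: (pc _ _ h1 _ hO1)|exact: (pc _ _ h2 _ hO)].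
split.
  by move=> y; rewrite !thr //; case; [apply: H11|apply: H1].
move=> y [V [[E|HV] Vy]].
  by subst V U; left; rewrite thr.
by right; rewrite thr //; apply: H2; exists V.
Qed.

Hypothesis hX0 : zero_dim TL.

Lemma approx (phi : CF TL) (eps : R) : 0 < eps ->
  exists c (psi : CF (T c)), forall x : L,
    Rabs (proj1_sig psi (proj1_sig x c) - proj1_sig phi x) <= eps.
Proof.
move=> he.
have [M HM] := bounded TL hXc _ (cf_cont TL phi).
have HM' : forall y, Rabs (proj1_sig phi y) <= Rabs M.
  by move=> y; have := HM y; have := Rle_abs M; lra.
set lo := - Rabs M - eps - 1.
pose Fm := fun U : L -> Prop => clopen TL U /\ exists x0, forall y, U y ->
   Rabs (proj1_sig phi y - proj1_sig phi x0) < eps / 2.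
have opF : forall U, Fm U -> TL U by move=> U [[]].
have cov : forall x, exists U, Fm U /\ U x.
  move=> x.
  have oG := cf_cont TL phi _ (R_ball_open (proj1_sig phi x) (eps / 2)).
  have [W [cW [Wx WG]]] := hX0 _ x oG ltac:(by rewrite /= Rminus_diag Rabs_R0; lra).
  by exists W; split => //; split => //; exists x.
have [l [Hl Hc]] := hXc Fm opF cov.
suff [c [psi Hpsi]] : exists c (psi : CF (T c)), forall y : L,
   (proj1_sig psi (proj1_sig y c) = lo \/ exists x0, Rabs (proj1_sig phi y - proj1_sig phi x0) < eps / 2 /\
        proj1_sig psi (proj1_sig y c) = proj1_sig phi x0 - eps / 2) /\
   ((exists U, In U l /\ U y) -> proj1_sig phi y - eps < proj1_sig psi (proj1_sig y c)).
  exists c, psi => y; have [H1 H2] := Hpsi y; have H3 := H2 (Hc y).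
  have := HM' y; case: H1 => [E|[x0 [Hx0 E]]]; rewrite E in H3 *.
    move: H3; rewrite /lo; unfold Rabs; repeat destruct Rcase_abs; lra.
  move: Hx0 H3; unfold Rabs; repeat destruct Rcase_abs; lra.
elim: l Hl {Hc} => [|U l IH] Hl.
  exists a0, (cfmk (T a0) (fun _ => lo) (cont_const (T a0) (htop a0) lo)) => y.
  by split; [left|case=> U [[] _]].
have [c [psi Hpsi]] := IH (fun V HV => Hl V (or_intror HV)).
have [[oU cU] [x0 Hx0]] := Hl U (or_introl eq_refl).
have [c1 [O [hO HO]]] := clopen_fin U oU cU.
pose F1 := fun v : X c1 => exists y : L, U y /\ proj1_sig y c1 = v.
pose F2 := fun v : X c1 => exists y : L, ~ U y /\ proj1_sig y c1 = v.
have cF1 : T c1 (fun v => ~ F1 v) :=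
  image_closed TL (T c1) (htop c1) hXc (hhaus c1) _ (lim_proj_cont le X p T c1) U cU.
have cU' : TL (fun y => ~ ~ U y) by apply: (top_ext oU) => y; split; [auto|apply: NNPP].
have cF2 : T c1 (fun v => ~ F2 v) :=
  image_closed TL (T c1) (htop c1) hXc (hhaus c1) _ (lim_proj_cont le X p T c1) (fun y => ~ U y) cU'.
have disj : forall v, F1 v -> F2 v -> False.
  move=> v [y [Uy Ey]] [y' [nUy' Ey']]; apply: nUy'; apply/HO; rewrite Ey'; rewrite -Ey; exact/HO.
have [u [cu [u01 [u1 u0]]]] := Bridge.ury (X c1) (T c1) (htop c1) (hcomp c1) (hhaus c1) F1 F2 cF1 cF2 disj.
have [e [h1e hce]] := le_ub c1 c.
set v := proj1_sig phi x0 - eps / 2.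
have hk : 0 <= v - lo by have := HM' x0; rewrite /v /lo; unfold Rabs at 1; destruct Rcase_abs; lra.
have cpsi' : continuous (T e) R_top (fun z => Rmax (lo + (v - lo) * u (p c1 e z)) (proj1_sig psi (p c e z))).
  apply: (cont_max (T e) (htop e)).
    apply: (cont_lip (T e) (fun z => u (p c1 e z)) _ (v - lo) hk (lip_aff lo (v - lo) hk)).
    exact: (cont_comp (T c1) (T e) (p c1 e) u (pc _ _ h1e) cu).
  exact: (cont_comp (T c) (T e) (p c e) _ (pc _ _ hce) (cf_cont _ psi)).
exists e, (cfmk (T e) _ cpsi') => y /=.
rewrite !thr //.
have [IH1 IH2] := Hpsi y.
case: (classic (U y)) => Uy.
  have -> : u (proj1_sig y c1) = 1 by apply: u1; exists y.
  replace (lo + (v - lo) * 1) with v by ring.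
  split.
    case: (Rmax_cases v (proj1_sig psi (proj1_sig y c))) => ->; last exact: IH1.
    by right; exists x0; split => //; apply: Hx0.
  move=> _; have := Rmax_ge_l v (proj1_sig psi (proj1_sig y c)); have := Hx0 y Uy.
  rewrite /v; unfold Rabs; destruct Rcase_abs; lra.
have -> : u (proj1_sig y c1) = 0 by apply: u0; exists y.
replace (lo + (v - lo) * 0) with lo by ring.
split.
  by case: (Rmax_cases lo (proj1_sig psi (proj1_sig y c))) => ->; [left|exact: IH1].
move=> [V [[E|HV] Vy]]; first by subst V; case: Uy.
have := IH2 (ex_intro _ V (conj HV Vy)).
have := Rmax_ge_r lo (proj1_sig psi (proj1_sig y c)); lra.
Qed.

End NE.

Section TM.
Variable m : forall a, CF (T a) -> R.
Hypothesis hm : limJ le X p T pc m.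

Lemma m_mm a : maxmin (T a) (m a). Proof. by case: hm. Qed.

Lemma m_thr a b (hab : le a b) (psi : CF (T a)) (psi' : CF (T b)) :
  (forall w, proj1_sig psi' w = proj1_sig psi (p a b w)) -> m b psi' = m a psi.
Proof.
move=> H; case: hm => _ Hj; rewrite -(Hj a b hab) /Jmap.
apply: (mm_ext (T b) (m b) (m_mm b)) => w /=; exact: H.
Qed.

Lemma m_supp c (psi psi' : CF (T c)) :
  (forall x : L, proj1_sig psi (proj1_sig x c) <= proj1_sig psi' (proj1_sig x c)) -> m c psi <= m c psi'.
Proof.
move=> H.
suff Hd : forall d, 0 < d -> m c psi <= m c psi' + d.
  case: (Rle_dec (m c psi) (m c psi')) => // Hn.
  have := Hd ((m c psi - m c psi') / 2) ltac:(lra); lra.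
move=> d hd.
have cpd : continuous (T c) R_top (fun v => proj1_sig psi' v + d) :=
  cont_lip (T c) _ (fun r => r + d) 1 ltac:(lra) (lip_shift d) (cf_cont _ psi').
have hK : closedb c (fun v => proj1_sig psi' v + d <= proj1_sig psi v).
  apply: (top_ext (open_lt (T c) (htop c) _ _ (cf_cont _ psi) cpd)) => v /=; split.
    by move=> ? ?; lra.
  by move/Rnot_le_lt.
have [b [hcb Hb]] := N_lemma c _ hK ltac:(by move=> x Kx; have := H x; lra).
have cb : continuous (T b) R_top (fun w => proj1_sig psi (p c b w)) :=
  cont_comp (T c) (T b) (p c b) _ (pc _ _ hcb) (cf_cont _ psi).
have cb' : continuous (T b) R_top (fun w => proj1_sig psi' (p c b w)) :=
  cont_comp (T c) (T b) (p c b) _ (pc _ _ hcb) (cf_cont _ psi').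
rewrite -(m_thr c b hcb psi (cfmk (T b) _ cb)) // -(m_thr c b hcb psi' (cfmk (T b) _ cb')) //.
apply: (mm_lip (T b) (htop b) (m b) (m_mm b) (hcomp b) (hhaus b)); first lra.
by move=> w /=; have := Hb w; move/Rnot_le_lt; lra.
Qed.

Lemma m_cmp c1 (psi1 : CF (T c1)) c2 (psi2 : CF (T c2)) eps : 0 <= eps ->
  (forall x : L, proj1_sig psi1 (proj1_sig x c1) <= proj1_sig psi2 (proj1_sig x c2) + eps) ->
  m c1 psi1 <= m c2 psi2 + eps.
Proof.
move=> he H.
have [d [h1 h2]] := le_ub c1 c2.
have cb1 := cont_comp (T c1) (T d) (p c1 d) _ (pc _ _ h1) (cf_cont _ psi1).
have cb2 := cont_comp (T c2) (T d) (p c2 d) _ (pc _ _ h2) (cf_cont _ psi2).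
have cb2e := cont_lip (T d) _ (fun r => r + eps) 1 ltac:(lra) (lip_shift eps) cb2.
rewrite -(m_thr c1 d h1 psi1 (cfmk (T d) _ cb1)) // -(m_thr c2 d h2 psi2 (cfmk (T d) _ cb2)) //.
have := m_supp d (cfmk (T d) _ cb1) (cfmk (T d) _ cb2e) ltac:(by move=> x /=; rewrite !thr //).
have := mm_lip (T d) (htop d) (m d) (m_mm d) (hcomp d) (hhaus d) (cfmk (T d) _ cb2e) (cfmk (T d) _ cb2) eps he
  ltac:(by move=> w /=; lra).
lra.
Qed.

End TM.

Definition lub (E : R -> Prop) : R := epsilon (inhabits 0) (fun r => is_lub E r).
Lemma lub_spec E : bound E -> (exists r, E r) -> is_lub E (lub E).
Proof.
move=> hb he; rewrite /lub; apply: epsilon_spec.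
by case: (completeness E hb he) => r Hr; exists r.
Qed.

Definition Eset (m : forall a, CF (T a) -> R) (phi : CF TL) (r : R) :=
  exists c (psi : CF (T c)), (forall x : L, proj1_sig psi (proj1_sig x c) <= proj1_sig phi x) /\ r = m c psi.
Definition gmap (m : forall a, CF (T a) -> R) (phi : CF TL) : R := lub (Eset m phi).

Lemma g_approx m (hm : limJ le X p T pc m) (phi : CF TL) c (psi : CF (T c)) eps : 0 <= eps ->
  (forall x : L, Rabs (proj1_sig psi (proj1_sig x c) - proj1_sig phi x) <= eps) ->
  Rabs (gmap m phi - m c psi) <= eps.
Proof.
move=> he H.
have cm := cont_lip (T c) _ (fun r => r + - eps) 1 ltac:(lra) (lip_shift (- eps)) (cf_cont _ psi).
set psim := cfmk (T c) _ cm.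
have Ein : Eset m phi (m c psim).
  exists c, psim; split => // x /=; have := H x; unfold Rabs; destruct Rcase_abs; lra.
have Eub : forall r, Eset m phi r -> r <= m c psi + eps.
  move=> r [c1 [psi1 [H1 ->]]]; apply: (m_cmp m hm c1 psi1 c psi eps he) => x.
  have := H1 x; have := H x; unfold Rabs; destruct Rcase_abs; lra.
have [Hub Hleast] := lub_spec (Eset m phi) ltac:(by exists (m c psi + eps)) ltac:(by exists (m c psim)).
have := Hleast _ Eub.
have := Hub _ Ein.
have := mm_lip (T c) (htop c) (m c) (m_mm m hm c) (hcomp c) (hhaus c) psi psim eps he
  ltac:(by move=> w /=; lra).
rewrite /gmap; unfold Rabs; destruct Rcase_abs; lra.
Qed.

Lemma h_mm (mu : CF TL -> R) : maxmin TL mu -> limJ le X p T pc (hJ le X p T mu).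
Proof.
move=> hmu; split.
  move=> a; split.
    by move=> c psi Hpsi; apply: (mm_const TL mu hmu) => x /=; apply: Hpsi.
  split.
    by move=> psi1 psi2 chi Hchi; apply: (mm_max TL mu hmu) => x /=; apply: Hchi.
  by move=> c psi chi Hchi; apply: (mm_min TL mu hmu) => x /=; apply: Hchi.
move=> a b hab; apply: functional_extensionality => psi.
rewrite /Jmap /hJ /Jmap.
by apply: (mm_ext TL mu hmu) => x /=; rewrite /lim_proj thr.
Qed.

Lemma eq_eps (a b : R) : (forall e, 0 < e -> Rabs (a - b) <= 3 * e) -> a = b.
Proof.
move=> H; apply: NNPP => Hn.
have Hp : 0 < Rabs (a - b) by apply: Rabs_pos_lt; lra.
have := H (Rabs (a - b) / 6) ltac:(lra); lra.
Qed.

Lemma Rabs0_eq (a b : R) : Rabs (a - b) <= 0 -> a = b.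
Proof. unfold Rabs; destruct Rcase_abs; lra. Qed.

Lemma h_cont : continuous (ptw_top TL) (prod_top (fun a => ptw_top (T a))) (hJ le X p T).
Proof.
move=> V hV mu Hmu.
have [lq [Hq Hs]] := hV _ Hmu.
suff [l [e [he Hl]]] : exists (l : list (CF TL)) (e : R), 0 < e /\ forall nu : CF TL -> R,
    (forall phi, In phi l -> Rabs (nu phi - mu phi) < e) ->
    forall q, In q lq -> projT2 q (hJ le X p T nu (projT1 q)).
  by exists l, e; split => // nu Hnu; apply: Hs; apply: Hl.
elim: lq Hq {Hs} => [|q lq IH] Hq.
  by exists nil, 1; split; [lra|move=> nu _ q []].
have [l [e [he Hl]]] := IH (fun q' Hq' => Hq q' (or_intror Hq')).
have [oq qmu] := Hq q (or_introl eq_refl).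
have [lp [e0 [he0 Hlp]]] := oq _ qmu.
pose comp := fun psi : CF (T (projT1 q)) =>
  exist (fun f => continuous TL R_top f) (fun x => proj1_sig psi (lim_proj le X p (projT1 q) x))
    (cont_comp_CF TL (T (projT1 q)) _ (lim_proj_cont le X p T (projT1 q)) psi).
exists (map comp lp ++ l), (Rmin e e0); split.
  by unfold Rmin; destruct Rle_dec; lra.
move=> nu Hnu q' [E|Hq'].
  subst q'; apply: Hlp => psi Hpsi.
  have := Hnu (comp psi) ltac:(apply: in_or_app; left; exact: in_map).
  have E1 : forall nu', hJ le X p T nu' (projT1 q) psi = nu' (comp psi) by [].
  rewrite !E1; have := Rmin_le_r e e0; lra.
apply: Hl => // phi Hphi.
have := Hnu phi ltac:(apply: in_or_app; right; exact: Hphi).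
have := Rmin_le_l e e0; lra.
Qed.

Section Main.
Variable a0 : A.
Hypothesis hXc : top_compact TL.
Hypothesis hX0 : zero_dim TL.

Lemma g_mm m : limJ le X p T pc m -> maxmin TL (gmap m).
Proof.
move=> hm; split.
  move=> c phi Hphi.
  pose psi := cfmk (T a0) (fun _ => c) (cont_const (T a0) (htop a0) c).
  have := g_approx m hm phi a0 psi 0 (Rle_refl 0) ltac:(by move=> x /=; rewrite Hphi Rminus_diag Rabs_R0; lra).
  move/Rabs0_eq => ->; apply: (mm_const (T a0) (m a0) (m_mm m hm a0)) => y //.
split.
  move=> phi psi chi Hchi; apply: eq_eps => e he.
  have [c1 [psi1 H1]] := approx a0 hXc hX0 phi e he.
  have [c2 [psi2 H2]] := approx a0 hXc hX0 psi e he.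
  have [d [h1 h2]] := le_ub c1 c2.
  have cb1 := cont_comp (T c1) (T d) (p c1 d) _ (pc _ _ h1) (cf_cont _ psi1).
  have cb2 := cont_comp (T c2) (T d) (p c2 d) _ (pc _ _ h2) (cf_cont _ psi2).
  have cM := cont_max (T d) (htop d) _ _ cb1 cb2.
  have EM := mm_max (T d) (m d) (m_mm m hm d) (cfmk (T d) _ cb1) (cfmk (T d) _ cb2) (cfmk (T d) _ cM)
     ltac:(by move=> x).
  rewrite (m_thr m hm c1 d h1 psi1 (cfmk (T d) _ cb1)) // (m_thr m hm c2 d h2 psi2 (cfmk (T d) _ cb2)) // in EM.
  have A1 := g_approx m hm phi c1 psi1 e ltac:(lra) H1.
  have A2 := g_approx m hm psi c2 psi2 e ltac:(lra) H2.
  have A3 := g_approx m hm chi d (cfmk (T d) _ cM) e ltac:(lra)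
    ltac:(by move=> x /=; rewrite Hchi !thr //; apply: Rle_trans (Rmax_lip _ _ _ _) _; apply: Rmax_lub; [exact: H1|exact: H2]).
  rewrite EM in A3.
  have B := Rmax_lip (m c1 psi1) (m c2 psi2) (gmap m phi) (gmap m psi).
  have B' : Rmax (Rabs (m c1 psi1 - gmap m phi)) (Rabs (m c2 psi2 - gmap m psi)) <= e.
    by apply: Rmax_lub; rewrite Rabs_minus_sym.
  have := Rabs_triang (gmap m chi - Rmax (m c1 psi1) (m c2 psi2)) (Rmax (m c1 psi1) (m c2 psi2) - Rmax (gmap m phi) (gmap m psi)).
  replace (gmap m chi - Rmax (m c1 psi1) (m c2 psi2) + (Rmax (m c1 psi1) (m c2 psi2) - Rmax (gmap m phi) (gmap m psi)))
    with (gmap m chi - Rmax (gmap m phi) (gmap m psi)) by ring.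
  lra.
move=> c phi chi Hchi; apply: eq_eps => e he.
have [c1 [psi1 H1]] := approx a0 hXc hX0 phi e he.
have cM := cont_lip (T c1) _ (Rmin c) 1 ltac:(lra) (lip_min c) (cf_cont _ psi1).
have EM := mm_min (T c1) (m c1) (m_mm m hm c1) c psi1 (cfmk (T c1) _ cM) ltac:(by move=> x).
have A1 := g_approx m hm phi c1 psi1 e ltac:(lra) H1.
have A3 := g_approx m hm chi c1 (cfmk (T c1) _ cM) e ltac:(lra)
  ltac:(by move=> x /=; rewrite Hchi; apply: Rle_trans (lip_min c _ _) _; have := H1 x; lra).
rewrite EM in A3.
have B := lip_min c (m c1 psi1) (gmap m phi).
rewrite Rabs_minus_sym in A1.
have := Rabs_triang (gmap m chi - Rmin c (m c1 psi1)) (Rmin c (m c1 psi1) - Rmin c (gmap m phi)).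
replace (gmap m chi - Rmin c (m c1 psi1) + (Rmin c (m c1 psi1) - Rmin c (gmap m phi)))
  with (gmap m chi - Rmin c (gmap m phi)) by ring.
lra.
Qed.

Lemma hg m : limJ le X p T pc m -> hJ le X p T (gmap m) = m.
Proof.
move=> hm; apply: functional_extensionality_dep => a; apply: functional_extensionality => psi.
rewrite /hJ /Jmap; apply: Rabs0_eq.
apply: (g_approx m hm _ a psi 0 (Rle_refl 0)) => x /=.
by rewrite /lim_proj Rminus_diag Rabs_R0; lra.
Qed.

Lemma gh mu : maxmin TL mu -> gmap (hJ le X p T mu) = mu.
Proof.
move=> hmu; apply: functional_extensionality => phi; apply: eq_eps => e he.
have hm := h_mm mu hmu.
have [c [psi H]] := approx a0 hXc hX0 phi e he.
have A1 := g_approx _ hm phi c psi e ltac:(lra) H.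
have cp := cont_lip (T c) _ (fun r => r + e) 1 ltac:(lra) (lip_shift e) (cf_cont _ psi).
have cn := cont_lip (T c) _ (fun r => r + - e) 1 ltac:(lra) (lip_shift (- e)) (cf_cont _ psi).
have M1 := mm_mono TL mu hmu phi (exist _ _ (cont_comp_CF TL (T c) _ (lim_proj_cont le X p T c) (cfmk (T c) _ cp)))
  ltac:(by move=> x /=; have := H x; rewrite /lim_proj; unfold Rabs; destruct Rcase_abs; lra).
have M2 := mm_mono TL mu hmu (exist _ _ (cont_comp_CF TL (T c) _ (lim_proj_cont le X p T c) (cfmk (T c) _ cn))) phi
  ltac:(by move=> x /=; have := H x; rewrite /lim_proj; unfold Rabs; destruct Rcase_abs; lra).
have L1 := mm_lip (T c) (htop c) _ (m_mm _ hm c) (hcomp c) (hhaus c) (cfmk (T c) _ cp) psi e ltac:(lra)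
  ltac:(by move=> w /=; lra).
have L2 := mm_lip (T c) (htop c) _ (m_mm _ hm c) (hcomp c) (hhaus c) psi (cfmk (T c) _ cn) e ltac:(lra)
  ltac:(by move=> w /=; lra).
have E1 : hJ le X p T mu c (cfmk (T c) _ cp) =
   mu (exist _ _ (cont_comp_CF TL (T c) _ (lim_proj_cont le X p T c) (cfmk (T c) _ cp))) by [].
have E2 : hJ le X p T mu c (cfmk (T c) _ cn) =
   mu (exist _ _ (cont_comp_CF TL (T c) _ (lim_proj_cont le X p T c) (cfmk (T c) _ cn))) by [].
rewrite E1 in L1; rewrite E2 in L2.
clear H; move: A1 L1 L2 M1 M2.
set g1 := gmap _ phi. set h1 := hJ le X p T mu c psi.
set u1 := mu (exist _ _ _). set u2 := mu (exist _ _ _).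
move=> A1 L1 L2 M1 M2.
move: A1; unfold Rabs; repeat destruct Rcase_abs; lra.
Qed.

Lemma g_cont : cont_on (prod_top (fun a => ptw_top (T a))) (limJ le X p T pc) (ptw_top TL) gmap.
Proof.
move=> U hU.
exists (fun m => exists B, prod_top (fun a => ptw_top (T a)) B /\ B m /\
   forall m', limJ le X p T pc m' -> B m' -> U (gmap m')).
split.
  move=> m [B [hB [Bm HB]]].
  have [lq [Hq Hs]] := hB m Bm.
  exists lq; split => // y Hy; exists B; split => //; split => //; exact: Hs.
move=> m hm; split; first by case=> B [_ [Bm HB]]; exact: HB.
move=> Um.
have [lf [eps [heps Hf]]] := hU _ Um.
suff [lq [Hq Hl]] : exists lq : list {a : A & (CF (T a) -> R) -> Prop},
    (forall q, In q lq -> ptw_top (T (projT1 q)) (projT2 q) /\ projT2 q (m (projT1 q))) /\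
    forall m', limJ le X p T pc m' -> (forall q, In q lq -> projT2 q (m' (projT1 q))) ->
      forall phi, In phi lf -> Rabs (gmap m' phi - gmap m phi) < eps.
  exists (fun m' => forall q, In q lq -> projT2 q (m' (projT1 q))); split.
    move=> m'' Hm''; exists lq; split => //.
    move=> q Hq'; split; [exact: (proj1 (Hq q Hq'))|exact: Hm'' q Hq'].
  split; first by move=> q Hq'; exact: (proj2 (Hq q Hq')).
  move=> m' hm' Hm'; apply: Hf; exact: Hl.
elim: lf {Hf} => [|phi lf IH].
  by exists nil; split => // m' _ _ phi [].
have [lq [Hq Hl]] := IH.
have [c [psi Hpsi]] := approx a0 hXc hX0 phi (eps / 3) ltac:(lra).
exists (existT (fun a => (CF (T a) -> R) -> Prop) c (fun n => Rabs (n psi - m c psi) < eps / 3) :: lq).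
split.
  move=> q [E|Hq']; last exact: Hq.
  subst q; split => /=.
    move=> n Hn; exists (psi :: nil), (eps / 3 - Rabs (n psi - m c psi)); split; first lra.
    move=> n' Hn'; have := Hn' psi (or_introl eq_refl).
    have := Rabs_triang (n' psi - n psi) (n psi - m c psi).
    replace (n' psi - n psi + (n psi - m c psi)) with (n' psi - m c psi) by ring; lra.
  by rewrite Rminus_diag Rabs_R0; lra.
move=> m' hm' Hm' phi' [E|Hphi'].
  subst phi'.
  have Q := Hm' _ (or_introl eq_refl); simpl in Q.
  have A1 := g_approx m' hm' phi c psi (eps / 3) ltac:(lra) Hpsi.
  have A2 := g_approx m hm phi c psi (eps / 3) ltac:(lra) Hpsi.
  move: A1 A2 Q; unfold Rabs; repeat destruct Rcase_abs; lra.
apply: Hl => //; move=> q Hq'; exact: Hm' q (or_intror Hq').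
Qed.

End Main.

Lemma main_sec (hXc : top_compact TL) (hX0 : zero_dim TL) :
  homeo_on (ptw_top TL) (maxmin TL) (prod_top (fun a => ptw_top (T a))) (limJ le X p T pc) (hJ le X p T).
Proof.
case: (classic (inhabited A)) => [[a0]|hA].
  split; first exact: h_mm.
  exists gmap; split; first by move=> m hm; apply: (g_mm a0 hXc hX0).
  split; first by move=> mu hmu; apply: (gh a0 hXc hX0).
  split; first by move=> m hm; apply: hg.
  split.
    by move=> V hV; exists (fun mu => V (hJ le X p T mu)); split; [exact: h_cont|move=> mu _].
  exact: (g_cont a0 hXc hX0).
have allL : forall x y : L, x = y.
  move=> [x hx] [y hy].
  have E : x = y by apply: functional_extensionality_dep => a; case: (hA (inhabits a)).
  subst y; f_equal; apply: proof_irrelevance.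
pose xs : L := exist _ (fun a => False_rect _ (hA (inhabits a))) (fun a b _ => False_ind _ (hA (inhabits a))).
pose g0 := fun (m : forall a, CF (T a) -> R) (phi : CF TL) => proj1_sig phi xs.
split; first exact: h_mm.
exists g0; split.
  move=> m _; split; first by move=> c phi Hphi; exact: Hphi.
  by split; [move=> phi psi chi Hchi; exact: Hchi|move=> c phi chi Hchi; exact: Hchi].
split.
  move=> mu hmu; apply: functional_extensionality => phi; symmetry.
  by apply: (mm_const TL mu hmu) => x; rewrite (allL x xs).
split.
  by move=> m _; apply: functional_extensionality_dep => a; case: (hA (inhabits a)).
split.
  by move=> V hV; exists (fun mu => V (hJ le X p T mu)); split; [exact: h_cont|move=> mu _].
move=> U hU; exists (fun _ => U (g0 (fun a _ => 0))); split.
  by move=> m Hm; exists nil; split => // q [].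
by move=> m _.
Qed.
End Limit.

Theorem mainTheorem6 (A : Type) (le : A -> A -> Prop) (X : A -> Type)
  (T : forall a, topology (X a)) (p : forall a b, X b -> X a)
  (hdir : directed le)
  (htop : forall a, is_topology (T a))
  (hcomp : forall a, top_compact (T a))
  (hhaus : forall a, top_hausdorff (T a))
  (pc : forall a b, le a b -> continuous (T b) (T a) (p a b))
  (hsys : inv_system le X p)
  (hXcomp : top_compact (@lim_top A le X p T))
  (hXhaus : top_hausdorff (@lim_top A le X p T))
  (hX0 : zero_dim (@lim_top A le X p T)) :
  homeo_on (ptw_top (@lim_top A le X p T)) (maxmin (@lim_top A le X p T))
           (@prod_top A (fun a => CF (T a) -> R) (fun a => ptw_top (T a))) (@limJ A le X p T pc)
           (@hJ A le X p T).
Proof.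
exact: (main_sec A le X T p hdir htop hcomp hhaus pc hsys hXcomp hX0).
Qed.
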